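(* Let $K\subset\mathbb R^n$ be compact and $B\subset\mathbb R^m$ a closed ball centred at the origin. Let $f,g:K\to B$ be continuous maps such that for every $x\in K$ there is $\lambda>0$ (depending on $x$) with $f(x)=\lambda\cdot g(x)$. If $g$ has convex fibres and $g(K)=B$, then $f(K)\supset\delta\cdot B$ for some $\delta>0$. *)

(* Defs.v *)
(* The topology on 'rV is the
   product topology, which coincides with the Euclidean one; the *norm* on
   'rV in MathComp-Analysis is the sup norm, so the Euclidean norm and the
   Euclidean closed ball are defined explicitly here. *)
From HB Require Import structures.
From mathcomp Require Import all_boot all_order all_algebra.
From mathcomp Require Import all_classical all_reals all_analysis.
Set Implicit Arguments. Unset Strict Implicit. Unset Printing Implicit Defensive.
Import Order.TTheory GRing.Theory Num.Theory numFieldNormedType.Exports.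
Local Open Scope classical_set_scope.
Local Open Scope ring_scope.

Definition enorm {R : realType} {m : nat} (v : 'rV[R]_m) : R :=
  Num.sqrt (\sum_(i < m) v ord0 i ^+ 2).

Definition eball0 {R : realType} (m : nat) (r : R) : set 'rV[R]_m :=
  [set y | enorm y <= r].

Definition convex_set_rV {R : realType} {n : nat} (S : set 'rV[R]_n) : Prop :=
  forall x y : 'rV[R]_n, S x -> S y -> forall t : R, 0 <= t -> t <= 1 ->
    S (t *: x + (1 - t) *: y).

Definition convex_fibres {R : realType} {n m : nat}
  (K : set 'rV[R]_n) (g : 'rV[R]_n -> 'rV[R]_m) : Prop :=
  forall y : 'rV[R]_m, convex_set_rV [set x | K x /\ g x = y].

Arguments eball0 {R} m r _.

(* Main.v *)
Require Import Defs.
From HB Require Import structures.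
From mathcomp Require Import all_boot all_order all_algebra.
From mathcomp Require Import all_classical all_reals all_analysis.
From mathcomp Require Import ring lra.
Import Order.TTheory GRing.Theory Num.Theory numFieldNormedType.Exports.
Local Open Scope classical_set_scope.
Local Open Scope ring_scope.

Definition dotv {R : realType} {m : nat} (u v : 'rV[R]_m) : R :=
  \sum_(i < m) u ord0 i * v ord0 i.

Section L.
Variables (R : realType) (m : nat).
Implicit Types (u v : 'rV[R]_m) (c : R).

Lemma dotvZl c u v : dotv (c *: u) v = c * dotv u v.
Proof. by rewrite /dotv mulr_sumr; apply: eq_bigr => i _; rewrite mxE mulrA. Qed.

Lemma dotvZr c u v : dotv u (c *: v) = c * dotv u v.
Proof. by rewrite /dotv mulr_sumr; apply: eq_bigr => i _; rewrite mxE mulrCA. Qed.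

Lemma dotv0l v : dotv 0 v = 0.
Proof. by rewrite /dotv big1 // => i _; rewrite mxE mul0r. Qed.

Lemma dotvv_ge0 v : 0 <= dotv v v.
Proof. by apply: sumr_ge0 => i _; rewrite -expr2 sqr_ge0. Qed.

Lemma enorm_sq v : enorm v ^+ 2 = dotv v v.
Proof.
rewrite /enorm sqr_sqrtr; last by apply: sumr_ge0 => i _; rewrite sqr_ge0.
by apply: eq_bigr => i _; rewrite expr2.
Qed.

Lemma enorm_ge0 v : 0 <= enorm v.
Proof. exact: sqrtr_ge0. Qed.

Lemma enorm_eq0 v : enorm v = 0 -> v = 0.
Proof.
move=> h; have h2 : dotv v v = 0 by rewrite -enorm_sq h expr0n.
apply/rowP => i; rewrite mxE.
have hi := @psumr_eq0P _ _ xpredT (fun j => v ord0 j * v ord0 j)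
  (fun j _ => ltac:(by rewrite /= -expr2 sqr_ge0)) h2 i isT.
by apply/eqP; rewrite -sqrf_eq0 expr2; apply/eqP.
Qed.

Lemma enormZ c v : enorm (c *: v) = `|c| * enorm v.
Proof.
rewrite /enorm -sqrtr_sqr -sqrtrM ?sqr_ge0 //; congr Num.sqrt.
rewrite mulr_sumr; apply: eq_bigr => i _; rewrite mxE exprMn //.
Qed.

Lemma enorm0 : enorm (0 : 'rV[R]_m) = 0.
Proof. by rewrite -(scale0r 0) enormZ normr0 mul0r. Qed.

Lemma enorm_le_sq v r : enorm v <= r -> dotv v v <= r ^+ 2.
Proof.
move=> h; rewrite -enorm_sq; apply: lerXn2r => //; rewrite ?inE ?enorm_ge0 //.
  by rewrite nnegrE enorm_ge0.
by rewrite nnegrE (le_trans (enorm_ge0 v) h).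
Qed.

End L.
Arguments dotvZl {R m}. Arguments dotvZr {R m}. Arguments dotv0l {R m}. Arguments dotvv_ge0 {R m}.
Arguments enorm_sq {R m}. Arguments enorm_ge0 {R m}. Arguments enorm_eq0 {R m v}. Arguments enormZ {R m}.
Arguments enorm0 {R m}. Arguments enorm_le_sq {R m v r}.

Lemma cvg_dotv {R : realType} {m : nat} {T : Type} (F : set_system T) {FF : Filter F}
  (u_ v_ : T -> 'rV[R]_m) (u v : 'rV[R]_m) :
  u_ @ F --> u -> v_ @ F --> v -> dotv (u_ x) (v_ x) @[x --> F] --> dotv u v.
Proof.
move=> cu cv; rewrite /dotv.
apply: (@cvg_big R _ +%R 0 xpredT _ _ F _ (fun i x => u_ x ord0 i * v_ x ord0 i)) => //.
  exact: add_continuous.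
move=> i _; apply: cvgM.
  apply: (@cvg_comp _ _ _ u_ (fun M : 'rV[R]_m => M ord0 i) _ _ _ cu); exact: coord_continuous.
apply: (@cvg_comp _ _ _ v_ (fun M : 'rV[R]_m => M ord0 i) _ _ _ cv); exact: coord_continuous.
Qed.

Lemma pos_lb {R : realType} (T : topologicalType) (K : set T) (h : T -> R) :
  compact K -> {within K, continuous h} -> (forall x, K x -> 0 < h x) ->
  exists2 p, 0 < p & forall x, K x -> p <= h x.
Proof.
move=> Kc hc hpos.
have hvc : {within K, continuous (fun x => (h x)^-1)}.
  rewrite continuous_subspace_in => x xK.
  move: hc; rewrite continuous_subspace_in => /(_ x xK) hx.
  apply: cvgV => //; rewrite gt_eqF //; apply: hpos; exact: set_mem.
have := compact_bounded (continuous_compact hvc Kc).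
case=> M [Mreal HM].
have M1 : M < `|M| + 1 by rewrite (le_lt_trans (real_ler_norm Mreal)) // ltrDl.
have := HM _ M1 => HB.
exists (`|M| + 1)^-1; first by rewrite invr_gt0 ltr_pwDr.
move=> x Kx; have := HB ((h x)^-1) (ex_intro2 _ _ x Kx erefl).
have hx := hpos x Kx.
have hxv : 0 <= (h x)^-1 by rewrite invr_ge0 ltW.
rewrite /= (ger0_norm hxv) => hle.
have Mp : 0 < `|M| + 1 by rewrite ltr_pwDr.
rewrite -[h x]invrK lef_pV2 ?posrE ?invr_gt0 //.
Qed.

Lemma i01 (R : realType) (t : R) : 0 <= t <= 1 -> `[0, 1]%classic t.
Proof. by move=> h; rewrite /= in_itv. Qed.
Lemma i01' (R : realType) (t : R) : `[0, 1]%classic t -> 0 <= t <= 1.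
Proof. by rewrite /= in_itv. Qed.

Theorem mainTheorem15 (R : realType) (n m : nat) (r : R)
  (K : set 'rV[R]_n) (f g : 'rV[R]_n -> 'rV[R]_m) :
  compact K ->
  {within K, continuous f} -> {within K, continuous g} ->
  (forall x, K x -> eball0 m r (f x)) ->
  (forall x, K x -> eball0 m r (g x)) ->
  (forall x, K x -> exists2 lam : R, 0 < lam & f x = lam *: g x) ->
  convex_fibres K g ->
  g @` K = eball0 m r ->
  exists2 delta : R, 0 < delta &
    [set delta *: y | y in eball0 m r] `<=` f @` K.
Proof.
move=> Kc fc gc fB gB hlam gconv gsurj.
have pre : forall y, eball0 m r y -> exists2 x, K x & g x = y.
  by move=> y; rewrite -gsurj => -[x Kx gx]; exists x.
have f0 : forall x, K x -> g x = 0 -> f x = 0.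
  by move=> x Kx gx; have [lam _ ->] := hlam x Kx; rewrite gx scaler0.
case: (ltP 0 r) => [r0|r0]; last first.
  exists 1 => //; move=> _ [y yB <-].
  have ny0 : enorm y = 0.
    by apply/le_anti; rewrite enorm_ge0 (le_trans yB r0).
  have y0 := enorm_eq0 ny0; subst y.
  have [x Kx gx] := pre 0 yB.
  by exists x => //; rewrite scaler0 f0.
set h := fun x => dotv (f x) (g x) + (r ^+ 2 - dotv (g x) (g x)).
have hc : {within K, continuous h}.
  move=> x; apply: cvgD; first by apply: cvg_dotv; [exact: fc|exact: gc].
  apply: cvgB; first exact: cvg_cst.
  by apply: cvg_dotv; exact: gc.
have hpos : forall x, K x -> 0 < h x.
  move=> x Kx; have [lam lam0 fx] := hlam x Kx.
  have q0 := dotvv_ge0 (g x).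
  have qr := enorm_le_sq (gB x Kx).
  rewrite /h fx dotvZl.
  have [->|qp] := eqVneq (dotv (g x) (g x)) 0.
    by rewrite mulr0 add0r subr0 exprn_gt0.
  have qpos : 0 < dotv (g x) (g x) by rewrite lt_def qp q0.
  by rewrite ltr_pwDl ?mulr_gt0 // subr_ge0.
have [p0 p00 hp0] := @pos_lb R _ K h Kc hc hpos.
have d0 : 0 < r ^+ 2 by rewrite exprn_gt0.
exists (p0 / r ^+ 2); first by rewrite divr_gt0.
move=> _ [y yB <-].
have [y0|y0] := eqVneq y 0.
  subst y; have [x Kx gx] := pre 0 yB.
  by exists x => //; rewrite scaler0 f0.

have ny0 : 0 < enorm y.
  rewrite lt_def enorm_ge0 andbT; apply/eqP => /enorm_eq0 h0.
  by rewrite h0 eqxx in y0.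
set ny := enorm y.
have nyr : ny <= r := yB.
set d := r ^+ 2.
have nyn0 : ny != 0 by rewrite gt_eqF.
have rn0 : r != 0 by rewrite gt_eqF.
have dn0 : d != 0 by rewrite gt_eqF.
set e := (r / ny) *: y.
have de : dotv e e = d.
  rewrite /e dotvZl dotvZr -enorm_sq -/ny /d; field; exact: nyn0.
set w := d^-1 *: e.
have ew : dotv e w = 1 by rewrite /w dotvZr de mulVf.
have enr : enorm e = r.
  by rewrite /e enormZ -/ny ger0_norm ?divr_ge0 ?ltW // divfK.
set psi := fun x => dotv (f x) w.
have ray : forall x t, K x -> g x = t *: e -> f x = psi x *: e.
  move=> x t Kx gx; have [lam _ fx] := hlam x Kx.
  have fx' : f x = (lam * t) *: e by rewrite fx gx scalerA.
  by rewrite /psi fx' dotvZl ew mulr1.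
have segB : forall t, t \in `[0, 1] -> eball0 m r (t *: e).
  move=> t; rewrite in_itv /= => /andP[t0 t1]; rewrite /eball0 /= enormZ enr ger0_norm //.
  exact: ler_piMl (ltW r0) t1.
set s0 := p0 / d * (ny / r).
have s00 : 0 <= s0 by rewrite mulr_ge0 ?divr_ge0 ?ltW.
have s0le : s0 <= p0 / d.
  apply: ler_piMr; first by rewrite divr_ge0 ?ltW.
  by rewrite ler_pdivrMr // mul1r.
have target : s0 *: e = (p0 / d) *: y.
  rewrite /e scalerA; congr (_ *: _); rewrite /s0; field.
  by rewrite dn0 nyn0 rn0.
have [x1 Kx1 gx1] := pre e (ltac:(by rewrite /eball0 /= enr) : eball0 m r e).
have psi1 : s0 <= psi x1.
  apply: le_trans s0le _.
  have f1 := ray x1 1 Kx1 (ltac:(by rewrite scale1r)).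
  have := hp0 x1 Kx1; rewrite /h f1 gx1 dotvZl de subrr addr0 => H.
  by rewrite ler_pdivrMr.
have [x0 Kx0 gx0] := pre 0 (ltac:(by rewrite /eball0 /= enorm0 ltW) : eball0 m r 0).
have psi0 : psi x0 = 0 by rewrite /psi f0 // dotv0l.
set Phi := fun x => (g x, psi x).
have Cc : compact (Phi @` K).
  have Phic : {within K, continuous Phi}.
    move=> x. rewrite /Phi. apply: (@cvg_pair _ _ _ _ (nbhs (g x)) (nbhs (psi x))); first exact: gc.
    by apply: cvg_dotv; [exact: fc| exact: cvg_cst].
  exact: continuous_compact Phic Kc.
set Seg := (fun t : R => t *: e) @` `[0, 1]%classic.
have Segc : closed Seg.
  apply: compact_closed; first exact: norm_hausdorff.
  apply: continuous_compact; last exact: segment_compact.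
  apply: continuous_subspaceT => t; apply: cvgZ; [exact: cvg_id | exact: cvg_cst].
have Segp : forall v, Seg v -> v = dotv v w *: e /\ dotv v w \in `[0, 1].
  by move=> _ [t t01 <-]; rewrite dotvZl ew mulr1.
set proj := fun p : 'rV[R]_m * R => dotv p.1 w.
have projc : continuous proj.
  by move=> p; apply: cvg_dotv; [exact: cvg_fst | exact: cvg_cst].
set ZA := [set p : 'rV[R]_m * R | Seg p.1 /\ p.2 <= s0].
set ZU := [set p : 'rV[R]_m * R | Seg p.1 /\ s0 <= p.2].
have ZAc : closed ZA.
  have -> : ZA = (fst @^-1` Seg) `&` (snd @^-1` [set s | s <= s0]) by [].
  apply: closedI; apply: preimage_closed.
  - by move=> p _; exact: cvg_fst.
  - exact: Segc.
  - by move=> p _; exact: cvg_snd.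
  - exact: closed_le.
have ZUc : closed ZU.
  have -> : ZU = (fst @^-1` Seg) `&` (snd @^-1` [set s | s0 <= s]) by [].
  apply: closedI; apply: preimage_closed.
  - by move=> p _; exact: cvg_fst.
  - exact: Segc.
  - by move=> p _; exact: cvg_snd.
  - exact: closed_ge.
set LA := proj @` (Phi @` K `&` ZA).
set UA := proj @` (Phi @` K `&` ZU).
have LAc : closed LA.
  apply: compact_closed; first exact: Rhausdorff.
  apply: continuous_compact; last exact: compact_closedI.
  exact: continuous_subspaceT.
have UAc : closed UA.
  apply: compact_closed; first exact: Rhausdorff.
  apply: continuous_compact; last exact: compact_closedI.
  exact: continuous_subspaceT.
have cover : `[0, 1]%classic = LA `|` UA.
  apply/seteqP; split.
  - move=> t t01; have [x Kx gx] := pre _ (segB t t01).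
    have Sg : Seg (g x) by exists t.
    have pt : proj (Phi x) = t by rewrite /proj /= gx dotvZl ew mulr1.
    case: (leP (psi x) s0) => H; [left|right]; exists (Phi x) => //;
      (split; [by exists x| split => //]).
    exact: ltW.
  - by move=> t [[p [_ [Sp _]] <-] | [p [_ [Sp _]] <-]]; exact: (Segp _ Sp).2.
have LA0 : LA 0.
  exists (Phi x0); last by rewrite /proj /= gx0 dotv0l.
  split; first by exists x0.
  split; last by rewrite /= psi0.
  by exists 0; [apply: i01; rewrite lexx ler01 | rewrite /= gx0 scale0r].
have UA1 : UA 1.
  exists (Phi x1); last by rewrite /proj /= gx1 ew.
  split; first by exists x1.
  split => //.
  by exists 1; [apply: i01; rewrite lexx ler01 | rewrite /= gx1 scale1r].
have [t [LAt UAt]] : exists t, LA t /\ UA t.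
  case: (pselect (exists t, LA t /\ UA t)) => // nI; exfalso.
  suff : ~ connected (`[0, 1]%classic : set R) by apply; exact: segment_connected.
  apply/connectedPn.
  exists (fun b => if b then UA else LA); split.
  - by case; [exists 1 | exists 0].
  - exact: cover.
  - split.
    + rewrite -(proj1 (closure_id LA) LAc).
      by apply/seteqP; split=> // s [? ?]; apply: nI; exists s.
    + rewrite -(proj1 (closure_id UA) UAc).
      by apply/seteqP; split=> // s [? ?]; apply: nI; exists s.
case: LAt => _ [[xa Kxa <-] [Sa la]] pa.
case: UAt => _ [[xb Kxb <-] [Sb lb]] pb.
have gxa : g xa = t *: e by rewrite -pa; exact: (Segp _ Sa).1.
have gxb : g xb = t *: e by rewrite -pb; exact: (Segp _ Sb).1.
set pth := fun tau : R => tau *: xa + (1 - tau) *: xb.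
set J := pth @` `[0, 1]%classic.
have JF : forall z, J z -> K z /\ g z = t *: e.
  move=> _ [tau /i01' /andP[t0 t1] <-].
  exact: (gconv (t *: e) xa xb (conj Kxa gxa) (conj Kxb gxb) tau t0 t1).
have pthc : continuous pth.
  move=> tau; apply: cvgD; apply: cvgZ.
  - exact: cvg_id.
  - exact: cvg_cst.
  - apply: cvgB; [exact: cvg_cst | exact: cvg_id].
  - exact: cvg_cst.
have Jconn : connected J.
  apply: connected_continuous_connected; first exact: segment_connected.
  exact: continuous_subspaceT.
have psic : {within K, continuous psi}.
  by move=> x; apply: cvg_dotv; [exact: fc|exact: cvg_cst].
have Iconn : is_interval (psi @` J).
  apply/connected_intervalP; apply: connected_continuous_connected Jconn _.
  by apply: continuous_subspaceW psic; move=> z /JF [].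
have [z Jz psiz] : (psi @` J) s0.
  apply: (Iconn (psi xa) (psi xb)).
  - exists xa => //; exists 1; first by apply: i01; rewrite ler01 lexx.
    by rewrite /pth scale1r subrr scale0r addr0.
  - exists xb => //; exists 0; first by apply: i01; rewrite ler01 lexx.
    by rewrite /pth scale0r add0r subr0 scale1r.
  - by rewrite la lb.
have [Kz gz] := JF z Jz.
by exists z => //; rewrite (ray z t Kz gz) psiz target.
Qed.
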